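(* A map $f \colon Y \to X$ in $\widehat{\square}_\vee$ has the right lifting property against all maps $\delta_k \hat{\times} m$ ($k \in \{0,1\}$, $m$ a monomorphism) if and only if it is an unbiased fibration, i.e. it has the right lifting property against $r \hat{\times}_B m$ for all $r \colon B \to \mathbb{I}$ and all monomorphisms $m \colon A \rightarrowtail B$.
   Context: Semilattices: sets with an associative, commutative, idempotent binary operation $\vee$; homomorphisms preserve $\vee$. Let $\square_\vee$ be the category whose objects are the semilattices $[1]^n$ ($n\in\mathbb{N}$, $[1]=\{0<1\}$ with $\vee=\max$, pointwise structure) and whose morphisms are all semilattice homomorphisms between them. Fix a strongly inaccessible cardinal $\kappa$ and let $\widehat{\square}_\vee$ be the category of presheaves on $\square_\vee$ valued in $\kappa$-small sets. $\mathbb{I}$ is the representable presheaf on $[1]$, $\delta_k \colon 1 \to \mathbb{I}$ the endpoint inclusions. For $f\colon X\to Y$, $g\colon X'\to Y'$, the pushout product $f\hat\times g$ is the induced map $(X\times Y')\sqcup_{X\times X'}(Y\times X')\to Y\times Y'$. For $r\colon B\to\mathbb I$ and a mono $m\colon A\to B$, $M_r(m)$ is the pushout of $m$ and $\langle rm,\mathrm{id}_A\rangle\colon A\to\mathbb I\times A$, and $r\hat\times_B m\colon M_r(m)\to\mathbb I\times B$ is the unique map restricting to $\langle r,\mathrm{id}_B\rangle$ on $B$ and to $\mathbb I\times m$ on $\mathbb I\times A$. *)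

(* Defs.v *)
From Stdlib Require Import Relations FunctionalExtensionality PropExtensionality
  ProofIrrelevance ClassicalEpsilon.
From HB Require Import structures.
From mathcomp Require Import all_boot.

Set Implicit Arguments.
Unset Strict Implicit.
Unset Printing Implicit Defensive.

(* The object [1]^n, with pointwise max as join. *)
Definition cube (n : nat) := {ffun 'I_n -> bool}.
Definition cjoin (n : nat) (x y : cube n) : cube n := [ffun i => x i || y i].

Record hom (m n : nat) := Hom {
  homf :> cube m -> cube n ;
  hom_join : forall x y, homf (cjoin x y) = cjoin (homf x) (homf y) }.

Lemma hom_ext m n (f g : hom m n) : (forall x, f x = g x) -> f = g.
Proof.
case: f g => f Hf [g Hg] /= E.
have ? : f = g := functional_extensionality _ _ E. subst g.
f_equal; apply: proof_irrelevance.
Qed.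

Definition hom_id n : hom n n := @Hom n n (fun x => x) (fun _ _ => erefl).

Lemma hom_comp_join m n p (g : hom n p) (f : hom m n) x y :
  g (f (cjoin x y)) = cjoin (g (f x)) (g (f y)).
Proof. by rewrite !hom_join. Qed.

Definition hom_comp m n p (g : hom n p) (f : hom m n) : hom m p :=
  @Hom m p (fun x => g (f x)) (hom_comp_join g f).

(* ---------- Presheaves (valued in a fixed universe = kappa-small sets) ---------- *)
Record psh := Psh {
  ob :> nat -> Type ;
  act : forall m n, hom m n -> ob n -> ob m ;
  act_id : forall n x, act (hom_id n) x = x ;
  act_comp : forall m n p (f : hom m n) (g : hom n p) x,
      act (hom_comp g f) x = act f (act g x) }.
Arguments act _ {m n} _ _.

Unset Implicit Arguments.
Record nat_tr (P Q : psh) := NatTr {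
  ntf :> forall n, P n -> Q n ;
  nt_nat : forall m n (f : hom m n) x, ntf m (act P f x) = act Q f (ntf n x) }.
Arguments ntf {P Q} _ _ _.
Arguments NatTr P Q _ _.
Arguments nt_nat {P Q} _ _ _ _ _.
Set Implicit Arguments.

Definition eq_nt (P Q : psh) (a b : nat_tr P Q) := forall n x, a n x = b n x.

Definition nt_id (P : psh) : nat_tr P P := @NatTr P P (fun n x => x) (fun _ _ _ _ => erefl).

Lemma nt_comp_nat (P Q R : psh) (g : nat_tr Q R) (f : nat_tr P Q) m n (h : hom m n) x :
  g m (f m (act P h x)) = act R h (g n (f n x)).
Proof. by rewrite !nt_nat. Qed.

Definition nt_comp (P Q R : psh) (g : nat_tr Q R) (f : nat_tr P Q) : nat_tr P R :=
  @NatTr P R (fun n x => g n (f n x)) (nt_comp_nat g f).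

Definition mono (A B : psh) (m : nat_tr A B) : Prop :=
  forall (Z : psh) (u v : nat_tr Z A), eq_nt (nt_comp m u) (nt_comp m v) -> eq_nt u v.

Definition rlp (A B : psh) (i : nat_tr A B) (Y X : psh) (f : nat_tr Y X) : Prop :=
  forall (u : nat_tr A Y) (v : nat_tr B X),
    eq_nt (nt_comp f u) (nt_comp v i) ->
    exists w : nat_tr B Y, eq_nt (nt_comp w i) u /\ eq_nt (nt_comp f w) v.

Definition term_psh : psh :=
  @Psh (fun _ => unit) (fun _ _ _ x => x) (fun _ _ => erefl) (fun _ _ _ _ _ _ => erefl).

Section Prod.
Variables P Q : psh.
Definition prod_act m n (f : hom m n) (x : P n * Q n) : P m * Q m :=
  (act P f x.1, act Q f x.2).
Lemma prod_act_id n x : prod_act (hom_id n) x = x.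
Proof. by case: x => a b; rewrite /prod_act /= !act_id. Qed.
Lemma prod_act_comp m n p (f : hom m n) (g : hom n p) x :
  prod_act (hom_comp g f) x = prod_act f (prod_act g x).
Proof. by case: x => a b; rewrite /prod_act /= !act_comp. Qed.
Definition prod_psh : psh :=
  @Psh (fun n => (P n * Q n)%type) prod_act prod_act_id prod_act_comp.
End Prod.

Definition nt_pair (Z P Q : psh) (f : nat_tr Z P) (g : nat_tr Z Q) : nat_tr Z (prod_psh P Q).
Proof.
refine (@NatTr Z (prod_psh P Q) (fun n z => (f n z, g n z)) _).
by move=> m n h x /=; rewrite /prod_act /= !nt_nat.
Defined.

Definition nt_prod (P P' Q Q' : psh) (f : nat_tr P P') (g : nat_tr Q Q') :
  nat_tr (prod_psh P Q) (prod_psh P' Q').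
Proof.
refine (@NatTr (prod_psh P Q) (prod_psh P' Q') (fun n x => (f n x.1, g n x.2)) _).
by move=> m n h [a b] /=; rewrite /prod_act /= !nt_nat.
Defined.

Lemma I_act_id n (x : hom n 1) : hom_comp x (hom_id n) = x.
Proof. exact: hom_ext. Qed.
Lemma I_act_comp m n p (f : hom m n) (g : hom n p) (x : hom p 1) :
  hom_comp x (hom_comp g f) = hom_comp (hom_comp x g) f.
Proof. exact: hom_ext. Qed.
Definition Ipsh : psh :=
  @Psh (fun n => hom n 1) (fun m n f x => hom_comp x f) I_act_id I_act_comp.

Lemma const_join n (k : bool) (x y : cube n) :
  ([ffun _ => k] : cube 1) = cjoin [ffun _ => k] [ffun _ => k].
Proof. by apply/ffunP => i; rewrite !ffunE orbb. Qed.
Definition const_hom n (k : bool) : hom n 1 :=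
  @Hom n 1 (fun _ => [ffun _ => k]) (@const_join n k).

Definition delta (k : bool) : nat_tr term_psh Ipsh.
Proof.
refine (@NatTr term_psh Ipsh (fun n _ => const_hom n k) _).
by move=> m n f x; apply: hom_ext.
Defined.

Section Pushout.
Variables A B C : psh.
Variables (f : nat_tr A B) (g : nat_tr A C).

Definition sact m n (h : hom m n) (x : B n + C n) : B m + C m :=
  match x with inl b => inl (act B h b) | inr c => inr (act C h c) end.

Inductive prel n : B n + C n -> B n + C n -> Prop :=
  prel_intro a : prel (inl (f n a)) (inr (g n a)).

Definition eqv n := clos_refl_sym_trans _ (@prel n).

Lemma eqv_refl n (x : B n + C n) : eqv x x.
Proof. exact: rst_refl. Qed.
Lemma eqv_sym n (x y : B n + C n) : eqv x y -> eqv y x.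
Proof. exact: rst_sym. Qed.
Lemma eqv_trans n (x y z : B n + C n) : eqv x y -> eqv y z -> eqv x z.
Proof. exact: rst_trans. Qed.

Lemma eqv_act m n (h : hom m n) x y : eqv x y -> eqv (sact h x) (sact h y).
Proof.
elim=> {x y} [x y [a]| x | x y _ IH | x y z _ IH1 _ IH2].
- apply: rst_step; rewrite /= -!nt_nat; exact: prel_intro.
- exact: rst_refl.
- exact: rst_sym.
- exact: rst_trans IH2.
Qed.

Definition qob n := {S : B n + C n -> Prop | exists x, S = @eqv n x}.

Lemma sig_ext n (s t : qob n) : proj1_sig s = proj1_sig t -> s = t.
Proof. case: s t => s Hs [t Ht] /= E; subst t; f_equal; apply: proof_irrelevance. Qed.

Definition cls n (x : B n + C n) : qob n := exist _ (@eqv n x) (ex_intro _ x erefl).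

Lemma eqv_pred n (x y : B n + C n) : eqv x y -> eqv x = eqv y.
Proof.
move=> E; apply: functional_extensionality => z; apply: propositional_extensionality.
split=> H.
- exact: eqv_trans (eqv_sym E) H.
- exact: eqv_trans E H.
Qed.

Lemma cls_surj n (S : qob n) : exists x, S = cls x.
Proof. case: S => S [x Ex]; exists x; exact: sig_ext. Qed.

Lemma qact_proof m n (h : hom m n) (S : qob n) :
  exists x, (fun y => exists x, proj1_sig S x /\ eqv (sact h x) y) = eqv x.
Proof.
case: S => S [x0 E0] /=; exists (sact h x0).
apply: functional_extensionality => y; apply: propositional_extensionality; split.
- by case=> x [Sx E]; rewrite E0 in Sx; exact: eqv_trans (eqv_act h Sx) E.
- by move=> E; exists x0; split => //; rewrite E0; exact: rst_refl.
Qed.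

Definition qact m n (h : hom m n) (S : qob n) : qob m :=
  exist _ _ (qact_proof h S).

Lemma qact_cls m n (h : hom m n) x : qact h (cls x) = cls (sact h x).
Proof.
apply: sig_ext => /=; apply: functional_extensionality => y;
  apply: propositional_extensionality; split.
- by case=> z [Sz E]; exact: eqv_trans (eqv_act h Sz) E.
- by move=> E; exists x; split => //; exact: rst_refl.
Qed.

Lemma qact_id n (S : qob n) : qact (hom_id n) S = S.
Proof. by case: (cls_surj S) => x ->; rewrite qact_cls; case: x => [b|c] /=; rewrite act_id. Qed.

Lemma qact_comp m n p (h : hom m n) (k : hom n p) S :
  qact (hom_comp k h) S = qact h (qact k S).
Proof.
by case: (cls_surj S) => x ->; rewrite !qact_cls; case: x => [b|c] /=; rewrite act_comp.
Qed.

Definition pushout : psh := @Psh qob qact qact_id qact_comp.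

Variables (Z : psh) (h1 : nat_tr B Z) (h2 : nat_tr C Z).
Hypothesis H : eq_nt (nt_comp h1 f) (nt_comp h2 g).

Definition sdesc n (x : B n + C n) : Z n :=
  match x with inl b => h1 n b | inr c => h2 n c end.

Lemma sdesc_eqv n (x y : B n + C n) : eqv x y -> sdesc x = sdesc y.
Proof.
elim=> {x y} [x y [a]| x | x y _ IH | x y z _ IH1 _ IH2] //.
- exact: H.
- by rewrite IH1.
Qed.

Definition rep n (S : qob n) : B n + C n :=
  proj1_sig (constructive_indefinite_description _ (proj2_sig S)).

Lemma rep_spec n (S : qob n) : proj1_sig S = eqv (rep S).
Proof. exact: (proj2_sig (constructive_indefinite_description _ (proj2_sig S))). Qed.

Definition qdesc n (S : qob n) : Z n := sdesc (rep S).

Lemma qdesc_cls n (x : B n + C n) : qdesc (cls x) = sdesc x.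
Proof.
rewrite /qdesc; apply: sdesc_eqv.
have E := rep_spec (cls x); simpl in E.
have Hx : eqv x x := eqv_refl x.
by rewrite E in Hx.
Qed.

Lemma qdesc_nat m n (h : hom m n) (S : qob n) :
  qdesc (qact h S) = act Z h (qdesc S).
Proof.
case: (cls_surj S) => x ->; rewrite qact_cls !qdesc_cls.
by case: x => [b|c] /=; rewrite nt_nat.
Qed.

Definition pushout_desc : nat_tr pushout Z := @NatTr pushout Z qdesc qdesc_nat.
End Pushout.

(* For f : X -> Y and g : X' -> Y', the map (X x Y') +_{X x X'} (Y x X') -> Y x Y'. *)
Definition pp (X Y X' Y' : psh) (f : nat_tr X Y) (g : nat_tr X' Y') :
  nat_tr (pushout (nt_prod (nt_id X) g) (nt_prod f (nt_id X'))) (prod_psh Y Y') :=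
  @pushout_desc _ _ _ (nt_prod (nt_id X) g) (nt_prod f (nt_id X')) (prod_psh Y Y')
    (nt_prod f (nt_id Y')) (nt_prod (nt_id Y) g) (fun _ _ => erefl).

(* M_r(m) = pushout of m and <r m, id_A> : A -> I x A; and
   r x^_B m : M_r(m) -> I x B, restricting to <r, id_B> on B and I x m on I x A. *)
Definition Mr (A B : psh) (r : nat_tr B Ipsh) (m : nat_tr A B) : psh :=
  pushout m (nt_pair (nt_comp r m) (nt_id A)).

Definition rpp (A B : psh) (r : nat_tr B Ipsh) (m : nat_tr A B) :
  nat_tr (Mr r m) (prod_psh Ipsh B) :=
  @pushout_desc _ _ _ m (nt_pair (nt_comp r m) (nt_id A)) (prod_psh Ipsh B)
    (nt_pair r (nt_id B)) (nt_prod (nt_id Ipsh) m) (fun _ _ => erefl).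

Definition unbiased_fibration (Y X : psh) (f : nat_tr Y X) : Prop :=
  forall (A B : psh) (r : nat_tr B Ipsh) (m : nat_tr A B), mono m -> rlp (rpp r m) f.

(* Main.v *)
Require Import Defs.
From mathcomp Require Import all_boot.
From Stdlib Require Import Relations.
Set Implicit Arguments.
Unset Strict Implicit.

Lemma hjoin_proof n (s t : hom n 1) x y :
  cjoin (s (cjoin x y)) (t (cjoin x y)) = cjoin (cjoin (s x) (t x)) (cjoin (s y) (t y)).
Proof. rewrite !hom_join; apply/ffunP => i; rewrite !ffunE; by rewrite orbACA. Qed.

Definition hjoin n (s t : hom n 1) : hom n 1 := @Hom n 1 (fun x => cjoin (s x) (t x)) (hjoin_proof s t).

Lemma hjoin0 n (s : hom n 1) : hjoin s (const_hom n false) = s.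
Proof. apply: hom_ext => x /=; apply/ffunP => i; by rewrite !ffunE orbF. Qed.
Lemma hjoin1 n (s : hom n 1) : hjoin s (const_hom n true) = const_hom n true.
Proof. apply: hom_ext => x /=; apply/ffunP => i; by rewrite !ffunE orbT. Qed.
Lemma hjoin_comp m n (s t : hom n 1) (h : hom m n) :
  hom_comp (hjoin s t) h = hjoin (hom_comp s h) (hom_comp t h).
Proof. exact: hom_ext. Qed.
Lemma const_comp m n k (h : hom m n) : hom_comp (const_hom n k) h = const_hom m k.
Proof. exact: hom_ext. Qed.

Lemma yo_act_id N n (x : hom n N) : hom_comp x (hom_id n) = x.
Proof. exact: hom_ext. Qed.
Lemma yo_act_comp N m n p (f : hom m n) (g : hom n p) (x : hom p N) :
  hom_comp x (hom_comp g f) = hom_comp (hom_comp x g) f.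
Proof. exact: hom_ext. Qed.
Definition yo N : psh :=
  @Psh (fun n => hom n N) (fun m n f x => hom_comp x f) (@yo_act_id N) (@yo_act_comp N).

Definition elt_nt (A : psh) N (x : A N) : nat_tr (yo N) A.
Proof.
refine (@NatTr (yo N) A (fun k h => act A h x) _).
by move=> k n g h /=; rewrite act_comp.
Defined.

Lemma mono_inj (A B : psh) (m : nat_tr A B) : mono m ->
  forall n x y, m n x = m n y -> x = y.
Proof.
move=> Hm n x y E.
have H : eq_nt (elt_nt x) (elt_nt y).
  apply: Hm => k h /=; by rewrite !nt_nat E.
have := H n (hom_id n); by rewrite /= !act_id.
Qed.

Lemma inj_mono (A B : psh) (m : nat_tr A B) :
  (forall n x y, m n x = m n y -> x = y) -> mono m.
Proof. move=> Hm Z u v E n x; apply: Hm; exact: E. Qed.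
Lemma cls_glue (A B C : psh) (f : nat_tr A B) (g : nat_tr A C) n (a : A n) :
  cls f g (inl (f n a)) = cls f g (inr (g n a)).
Proof. apply: sig_ext => /=; apply: eqv_pred; apply: rst_step; exact: prel_intro. Qed.

Lemma cls_nat (A B C : psh) (f : nat_tr A B) (g : nat_tr A C) m n (h : hom m n) x :
  act (pushout f g) h (cls f g x) = cls f g (sact h x).
Proof. exact: qact_cls. Qed.

Lemma desc_cls (A B C : psh) (f : nat_tr A B) (g : nat_tr A C) (Z : psh)
  (h1 : nat_tr B Z) (h2 : nat_tr C Z) (H : eq_nt (nt_comp h1 f) (nt_comp h2 g)) n x :
  pushout_desc H n (cls f g x) = sdesc h1 h2 x.
Proof. exact: qdesc_cls. Qed.

Definition bang (B : psh) : nat_tr B term_psh := @NatTr B term_psh (fun _ _ => tt) (fun _ _ _ _ => erefl).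

Section Back.
Variables (k : bool) (A B : psh) (m : nat_tr A B).
Let r := nt_comp (delta k) (bang B).
Let g := nt_pair (nt_comp r m) (nt_id A).
Let f1 := nt_prod (nt_id term_psh) m.
Let g1 := nt_prod (delta k) (nt_id A).

Definition psi1 : nat_tr (prod_psh term_psh B) (Mr r m).
refine (@NatTr (prod_psh _ _) (Mr r m) (fun n (p : (prod_psh term_psh B) n) => cls m g (inl p.2)) _).
by move=> p n h x; rewrite /Mr cls_nat.
Defined.
Definition psi2 : nat_tr (prod_psh Ipsh A) (Mr r m).
refine (@NatTr (prod_psh _ _) (Mr r m) (fun n (p : (prod_psh Ipsh A) n) => cls m g (inr p)) _).
by move=> p n h x; rewrite /Mr cls_nat.
Defined.
Lemma psi_ok : eq_nt (nt_comp psi1 f1) (nt_comp psi2 g1).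
Proof. move=> n [[] a] /=; exact: (cls_glue m g a). Qed.
Definition psi := pushout_desc psi_ok.

Definition phi1 : nat_tr B (pushout f1 g1).
refine (@NatTr B (pushout f1 g1) (fun n (b : B n) => cls f1 g1 (inl (tt, b))) _).
by move=> p n h x; rewrite cls_nat.
Defined.
Definition phi2 : nat_tr (prod_psh Ipsh A) (pushout f1 g1).
refine (@NatTr (prod_psh _ _) (pushout f1 g1) (fun n (p : (prod_psh Ipsh A) n) => cls f1 g1 (inr p)) _).
by move=> p n h x; rewrite cls_nat.
Defined.
Lemma phi_ok : eq_nt (nt_comp phi1 m) (nt_comp phi2 g).
Proof. move=> n a /=; exact: (cls_glue f1 g1 (tt, a)). Qed.
Definition phi : nat_tr (Mr r m) (pushout f1 g1) := pushout_desc phi_ok.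

Lemma phi_psi : eq_nt (nt_comp phi psi) (nt_id _).
Proof.
move=> n S; case: (cls_surj S) => x ->.
rewrite /= (qdesc_cls psi_ok); case: x => [[[] b]|[s a]] /=; rewrite (qdesc_cls phi_ok) //.
Qed.

Lemma pp_phi : eq_nt (nt_comp (pp (delta k) m) phi) (rpp r m).
Proof.
move=> n S; case: (cls_surj S) => x -> /=.
rewrite (qdesc_cls phi_ok); case: x => [b|[s a]] /=; rewrite !qdesc_cls //.

Qed.

Lemma rpp_psi : eq_nt (nt_comp (rpp r m) psi) (pp (delta k) m).
Proof.
move=> n S; case: (cls_surj S) => x -> /=.
rewrite (qdesc_cls psi_ok); case: x => [[[] b]|[s a]] /=; rewrite !qdesc_cls //.
Qed.

Lemma back (Y X : psh) (f : nat_tr Y X) : rlp (rpp r m) f -> rlp (pp (delta k) m) f.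
Proof.
move=> H u v Huv.
have [w [Hw1 Hw2]] := H (nt_comp u phi) v (fun n S => etrans (Huv n (phi n S)) (f_equal (v n) (pp_phi S))).
exists w; split => // n S.
have E1 := rpp_psi S; have E2 := Hw1 n (psi n S); have E3 := phi_psi S.
simpl in E1, E2, E3 |- *. by rewrite -E1 E2 E3.
Qed.
End Back.

Lemma rpp_inj (A B : psh) (r : nat_tr B Ipsh) (m : nat_tr A B) : mono m ->
  forall n S1 S2, rpp r m n S1 = rpp r m n S2 -> S1 = S2.
Proof.
move=> Hm n S1 S2; case: (cls_surj S1) => x ->; case: (cls_surj S2) => y -> /=.
rewrite !qdesc_cls //.
case: x => [b|[s a]]; case: y => [b'|[s' a']] /= E.
- by case: E => _ ->.
- case: E => E1 E2; subst b; rewrite -E1; exact: cls_glue.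
- case: E => E1 E2; subst b'; rewrite E1; symmetry; exact: cls_glue.
- case: E => E1 E2; have E3 := mono_inj Hm E2; by subst.
Qed.

Section Fwd.
Variables (Y X : psh) (f : nat_tr Y X) (A B : psh) (r : nat_tr B Ipsh) (m : nat_tr A B).
Let g := nt_pair (nt_comp r m) (nt_id A).
Variables (u : nat_tr (Mr r m) Y) (v : nat_tr (prod_psh Ipsh B) X).
Hypothesis Huv : eq_nt (nt_comp f u) (nt_comp v (rpp r m)).

Lemma fu_inl n b : f n (u n (cls m g (inl b))) = v n (r n b, b).
Proof. have := Huv (cls m g (inl b)); rewrite /= qdesc_cls //. Qed.
Lemma fu_inr n s a : f n (u n (cls m g (inr (s, a)))) = v n (s, m n a).
Proof. have := Huv (cls m g (inr (s, a))); rewrite /= qdesc_cls //. Qed.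

Lemma u_nat n p (h : hom p n) x : act Y h (u n (cls m g x)) = u p (cls m g (sact h x)).
Proof. by rewrite -nt_nat /Mr cls_nat. Qed.

Let f1 := nt_prod (nt_id term_psh) m.
Let g1 := nt_prod (delta false) (nt_id A).

Definition a1 : nat_tr (prod_psh term_psh B) Y.
refine (@NatTr (prod_psh term_psh B) Y (fun n (p : (prod_psh term_psh B) n) => u n (cls m g (inl p.2))) _).
by move=> p n h x; rewrite u_nat.
Defined.

Lemma rm_nat p n (h : hom p n) a : r p (m p (act A h a)) = hom_comp (r n (m n a)) h.
Proof. by rewrite !nt_nat. Qed.

Definition b1 : nat_tr (prod_psh Ipsh A) Y.
refine (@NatTr (prod_psh Ipsh A) Y (fun n (p : (prod_psh Ipsh A) n) => u n (cls m g (inr (hjoin (r n (m n p.2)) p.1, p.2)))) _).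
move=> p n h [s a]; rewrite u_nat /= /prod_act /= hjoin_comp rm_nat //.
Defined.

Lemma c1 : eq_nt (nt_comp a1 f1) (nt_comp b1 g1).
Proof. move=> n [[] a] /=; rewrite hjoin0; congr (u n _); exact: (cls_glue m g a). Qed.

Definition U1 := pushout_desc c1.

Definition V1 : nat_tr (prod_psh Ipsh B) X.
refine (@NatTr (prod_psh Ipsh B) X (fun n (p : (prod_psh Ipsh B) n) => v n (hjoin (r n p.2) p.1, p.2)) _).
move=> p n h [s b] /=; rewrite -nt_nat /= /prod_act /= hjoin_comp nt_nat //.
Defined.

Lemma eq1 : eq_nt (nt_comp f U1) (nt_comp V1 (pp (delta false) m)).
Proof.
move=> n S; case: (cls_surj S) => x -> /=.
rewrite (qdesc_cls c1) !qdesc_cls //.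
case: x => [[[] b]|[s a]] /=.
- by rewrite fu_inl hjoin0.
- by rewrite fu_inr.
Qed.

Section Step2.
Variable w1 : nat_tr (prod_psh Ipsh B) Y.
Hypothesis Hw1a : eq_nt (nt_comp w1 (pp (delta false) m)) U1.
Hypothesis Hw1b : eq_nt (nt_comp f w1) V1.

Lemma w1_inr n s a : w1 n (s, m n a) = u n (cls m g (inr (hjoin (r n (m n a)) s, a))).
Proof. have := Hw1a (cls f1 g1 (inr (s, a))); rewrite /= !qdesc_cls //; exact: c1. Qed.
Lemma w1_inl n b : w1 n (const_hom n false, b) = u n (cls m g (inl b)).
Proof. have := Hw1a (cls f1 g1 (inl (tt, b))); rewrite /= !qdesc_cls //; exact: c1. Qed.
Lemma fw1 n s b : f n (w1 n (s, b)) = v n (hjoin (r n b) s, b).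
Proof. exact: (Hw1b (s, b)). Qed.

Definition Fs n (t : hom n 1) (x : B n + (hom n 1 * A n)%type) : Y n :=
  match x with inl b => w1 n (t, b) | inr (s, a) => u n (cls m g (inr (hjoin s t, a))) end.

Lemma Fs_eqv n t (x y : B n + (hom n 1 * A n)%type) : eqv m g x y -> Fs t x = Fs t y.
Proof.
elim=> {x y} [x y [a]| x | x y _ IH | x y z _ IH1 _ IH2] //=.
- by rewrite w1_inr.
- by rewrite IH1.
Qed.

Definition F (n : nat) (p : (prod_psh Ipsh (Mr r m)) n) : Y n := Fs p.1 (rep p.2).

Lemma F_cls n (t : hom n 1) (x : B n + (hom n 1 * A n)%type) : F (n:=n) (t, cls m g x) = Fs t x.
Proof.
rewrite /F /=; apply: Fs_eqv.
have E := rep_spec (cls m g x); simpl in E.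
have Hx : eqv m g x x by apply: rst_refl.
by rewrite E in Hx.
Qed.

Definition b2 : nat_tr (prod_psh Ipsh (Mr r m)) Y.
refine (@NatTr (prod_psh Ipsh (Mr r m)) Y F _).
move=> p n h [t S]; case: (cls_surj S) => x -> /=.
rewrite /prod_act /= qact_cls !F_cls.
case: x => [b|[s a]] /=.
- by rewrite -nt_nat.
- by rewrite u_nat /= /prod_act /= hjoin_comp.
Defined.

Let f2 := nt_prod (nt_id term_psh) (rpp r m).
Let g2 := nt_prod (delta true) (nt_id (Mr r m)).

Definition a2 : nat_tr (prod_psh term_psh (prod_psh Ipsh B)) Y.
refine (@NatTr (prod_psh term_psh (prod_psh Ipsh B)) Y
  (fun n (p : (prod_psh term_psh (prod_psh Ipsh B)) n) => w1 n (const_hom n true, p.2.2)) _).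
move=> p n h [t [s b]] /=; rewrite -nt_nat /= /prod_act /= const_comp //.
Defined.

Lemma c2 : eq_nt (nt_comp a2 f2) (nt_comp b2 g2).
Proof.
move=> n [[] S]; case: (cls_surj S) => x -> /=.
rewrite F_cls qdesc_cls //.
case: x => [b|[s a]] //=.
by rewrite w1_inr !hjoin1.
Qed.

Definition U2 := pushout_desc c2.

Definition V2 : nat_tr (prod_psh Ipsh (prod_psh Ipsh B)) X.
refine (@NatTr (prod_psh Ipsh (prod_psh Ipsh B)) X
  (fun n (p : (prod_psh Ipsh (prod_psh Ipsh B)) n) => v n (hjoin p.2.1 p.1, p.2.2)) _).
move=> p n h [t [s b]] /=; rewrite -nt_nat /= /prod_act /= hjoin_comp //.
Defined.

Lemma eq2 : eq_nt (nt_comp f U2) (nt_comp V2 (pp (delta true) (rpp r m))).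
Proof.
move=> n S; case: (cls_surj S) => y -> /=.
rewrite (qdesc_cls c2) !qdesc_cls //.
case: y => [[[] [s b]]|[t S']] /=.
- by rewrite fw1 !hjoin1.
- case: (cls_surj S') => x ->; rewrite F_cls qdesc_cls //.
  case: x => [b|[s a]] /=.
  + by rewrite fw1.
  + by rewrite fu_inr.
Qed.

Variable w2 : nat_tr (prod_psh Ipsh (prod_psh Ipsh B)) Y.
Hypothesis Hw2a : eq_nt (nt_comp w2 (pp (delta true) (rpp r m))) U2.
Hypothesis Hw2b : eq_nt (nt_comp f w2) V2.

Definition W : nat_tr (prod_psh Ipsh B) Y.
refine (@NatTr (prod_psh Ipsh B) Y
  (fun n (p : (prod_psh Ipsh B) n) => w2 n (const_hom n false, p)) _).
move=> p n h [s b] /=; rewrite -nt_nat /= /prod_act /= const_comp //.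
Defined.

Lemma W_ok : eq_nt (nt_comp W (rpp r m)) u /\ eq_nt (nt_comp f W) v.
Proof.
split.
- move=> n S; case: (cls_surj S) => x -> /=.
  have := Hw2a (cls f2 g2 (inr (const_hom n false, cls m g x))).
  rewrite /= !qdesc_cls //=; last exact: c2.
  move=> E; rewrite qdesc_cls // in E; rewrite E F_cls {E}.
  case: x => [b|[s a]] /=.
  + by rewrite w1_inl.
  + by rewrite hjoin0.
- move=> n [s b]; have := Hw2b (const_hom n false, (s, b)); rewrite /= hjoin0 //.
Qed.
End Step2.

Lemma fwd (H0 : rlp (pp (delta false) m) f) (H1 : mono m -> rlp (pp (delta true) (rpp r m)) f) :
  mono m -> exists w : nat_tr (prod_psh Ipsh B) Y, eq_nt (nt_comp w (rpp r m)) u /\ eq_nt (nt_comp f w) v.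
Proof.
move=> Hm.
have [w1 [Ha Hb]] := H0 _ _ eq1.
have [w2 [Ha2 Hb2]] := H1 Hm _ _ (eq2 Ha Hb).
exists (W w2); exact: W_ok.
Qed.
End Fwd.

Theorem mainTheorem3 (Y X : psh) (f : nat_tr Y X) :
  (forall (k : bool) (A B : psh) (m : nat_tr A B), mono m -> rlp (pp (delta k) m) f)
  <-> unbiased_fibration f.
Proof.
split.
- move=> H A B r m Hm u v Huv.
  apply: (fwd Huv (H false A B m Hm)) => // Hm'.
  apply: H; apply: inj_mono; exact: rpp_inj.
- move=> H k A B m Hm; apply: back; exact: H.
Qed.
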